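(* Given a linear-non-linear adjunction $\mathcal F\dashv\mathcal U$, define $\mathcal F^S:S(\mathscr C)\to LS(\mathscr C)$ by $\mathcal F^S(X,J):=(X,\mathcal F(J))$ and, for $(f,u):(X,J)\to(Y,K)$, $\mathcal F^S(f,u):=(f,m_{X,J};\mathcal F(u))$. Then $\mathcal F^S$ is a functor and a split fibred functor from $\mathbf s$ to $\mathbf{ls}$ (i.e. $\mathbf{ls}\circ\mathcal F^S=\mathbf s$ and it preserves the chosen cartesian morphisms). Moreover, on each fibre over $X$ it is a symmetric lax monoidal functor from $(S(\mathscr C)_X,\times_X,(X,I))$ to $(LS(\mathscr C)_X,\otimes_X,(X,1))$, with structure maps $(\mathrm{id}_X,(\mathbf w_X\otimes\mathrm{id}_1);m_1):(X,1)\to\mathcal F^S(X,I)$ and $(\mathrm{id}_X,(\mathbf w_X\otimes\mathrm{id}_{\mathcal F(J)\otimes\mathcal F(K)});m_{J,K}):\mathcal F^S(X,J)\otimes_X\mathcal F^S(X,K)\to\mathcal F^S((X,J)\times_X(X,K))$.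
   Context: Composition is diagrammatic; monoidal categories are strict. A linear-non-linear adjunction is a symmetric monoidal adjunction $\mathcal F\dashv\mathcal U$, $\mathcal F:\mathscr C\to\mathcal L$, between a cartesian category $(\mathscr C,\times,I)$ and a symmetric monoidal category $(\mathcal L,\otimes,1)$ (symmetry $\sigma$); $\mathcal F$ strong monoidal via isomorphisms $m_{X,Y}:\mathcal F(X)\otimes\mathcal F(Y)\to\mathcal F(X\times Y)$, $m_1:1\to\mathcal F(I)$. $\mathbf c_X:=\mathcal F(\Delta_X);m_{X,X}^{-1}$, $\mathbf w_X:=\mathcal F(t_X);m_1^{-1}$ with $t_X:X\to I$ terminal. Simple category $S(\mathscr C)$: objects $(X,J)$; morphisms $(f,u):(X,J)\to(Y,K)$ with $f:X\to Y$, $u:X\times J\to K$; composition $(f,u);(g,v)=(f;g,(\Delta_X\times\mathrm{id}_J);(f\times u);v)$, identity $(\mathrm{id}_X,\pi_2)$; split fibration $\mathbf s(f,u)=f$ with chosen cartesian morphisms $(f,\pi_2):(X,K)\to(Y,K)$; fibre $S(\mathscr C)_X$ has cartesian product $(X,J)\times_X(X,K)=(X,J\times K)$, unit $(X,I)$. Linear simple category $LS(\mathscr C)$: objects $(X,A)$, $X\in\mathscr C,A\in\mathcal L$; morphisms $(f,u):(X,A)\to(Y,B)$ with $f:X\to Y$, $u:\mathcal F(X)\otimes A\to B$; composition $(f,u);(g,v)=(f;g,(\mathbf c_X\otimes\mathrm{id}_A);(\mathcal F(f)\otimes u);v)$, identity $(\mathrm{id}_X,\mathbf w_X\otimes\mathrm{id}_A)$;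 split fibration $\mathbf{ls}(f,u)=f$ with chosen cartesian morphisms $(f,\mathbf w_X\otimes\mathrm{id}_B):(X,B)\to(Y,B)$; fibre $LS(\mathscr C)_X$ (morphisms $(\mathrm{id}_X,u)$) has monoidal structure $(X,A)\otimes_X(X,B)=(X,A\otimes B)$, unit $(X,1)$, $(\mathrm{id}_X,u)\otimes_X(\mathrm{id}_X,v)=(\mathrm{id}_X,(\mathbf c_X\otimes\mathrm{id}_{A\otimes B});(\mathrm{id}_{\mathcal F(X)}\otimes\sigma_{\mathcal F(X),A}\otimes\mathrm{id}_B);(u\otimes v))$. Structure maps are given by their second components (first component $\mathrm{id}_X$). *)

(* Defs.v *)
(* Composition is diagrammatic:
   [f ;; g] means "first f, then g". *)

Record Category := {
  ob :> Type;
  hom : ob -> ob -> Type;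
  idm : forall a, hom a a;
  comp : forall a b c, hom a b -> hom b c -> hom a c;
  comp_id_l : forall a b (f : hom a b), comp a a b (idm a) f = f;
  comp_id_r : forall a b (f : hom a b), comp a b b f (idm b) = f;
  comp_assoc : forall a b c d (f : hom a b) (g : hom b c) (h : hom c d),
      comp a c d (comp a b c f g) h = comp a b d f (comp b c d g h)
}.
Arguments idm {C} a : rename.
Arguments comp {C a b c} _ _ : rename.
Notation "f ;; g" := (comp f g) (at level 40, left associativity).

(* In a *strict* monoidal category
   the associativity/unit laws hold as equalities of objects, and these
   morphisms are exactly the (elided) identity structure maps. *)
Definition idc {C : Category} {a b : ob C} (e : a = b) : hom C a b :=
  match e in _ = b' return hom C a b' with eq_refl => idm a end.

Record Functor (C D : Category) := {
  fob :> ob C -> ob D;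
  fmap : forall a b, hom C a b -> hom D (fob a) (fob b);
  fmap_id : forall a, fmap a a (idm a) = idm (fob a);
  fmap_comp : forall a b c (f : hom C a b) (g : hom C b c),
      fmap a c (f ;; g) = fmap a b f ;; fmap b c g
}.
Arguments fob {C D} _ _.
Arguments fmap {C D} _ {a b} _.

Record Cartesian := {
  ccat :> Category;
  prod : ob ccat -> ob ccat -> ob ccat;
  p1 : forall X Y, hom ccat (prod X Y) X;
  p2 : forall X Y, hom ccat (prod X Y) Y;
  pair : forall Z X Y, hom ccat Z X -> hom ccat Z Y -> hom ccat Z (prod X Y);
  pair_p1 : forall Z X Y (f : hom ccat Z X) (g : hom ccat Z Y),
      pair Z X Y f g ;; p1 X Y = f;
  pair_p2 : forall Z X Y (f : hom ccat Z X) (g : hom ccat Z Y),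
      pair Z X Y f g ;; p2 X Y = g;
  pair_uniq : forall Z X Y (h : hom ccat Z (prod X Y)),
      h = pair Z X Y (h ;; p1 X Y) (h ;; p2 X Y);
  term : ob ccat;
  bang : forall X, hom ccat X term;
  bang_uniq : forall X (h : hom ccat X term), h = bang X
}.
Arguments prod {c} X Y.
Arguments p1 {c} X Y.
Arguments p2 {c} X Y.
Arguments pair {c Z X Y} _ _.
Arguments term {c}.
Arguments bang {c} X.

Section CartesianOps.
Variable C : Cartesian.
Definition diag (X : C) : hom C X (prod X X) := pair (idm X) (idm X).
Definition prodm {X X' Y Y' : C} (f : hom C X X') (g : hom C Y Y')
  : hom C (prod X Y) (prod X' Y') := pair (p1 X Y ;; f) (p2 X Y ;; g).
Definition assocC (X Y Z : C) : hom C (prod (prod X Y) Z) (prod X (prod Y Z)) :=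
  pair (p1 _ _ ;; p1 X Y) (pair (p1 _ _ ;; p2 X Y) (p2 _ Z)).
Definition swapC (X Y : C) : hom C (prod X Y) (prod Y X) :=
  pair (p2 X Y) (p1 X Y).
End CartesianOps.
Arguments diag {C} X.
Arguments prodm {C X X' Y Y'} f g.
Arguments assocC {C} X Y Z.
Arguments swapC {C} X Y.

Record SymStrictMonoidal := {
  mcat :> Category;
  tens : ob mcat -> ob mcat -> ob mcat;
  tensm : forall a b c d, hom mcat a b -> hom mcat c d ->
      hom mcat (tens a c) (tens b d);
  munit : ob mcat;
  tens_id : forall a b, tensm a a b b (idm a) (idm b) = idm (tens a b);
  tens_comp : forall a b c a' b' c' (f : hom mcat a b) (g : hom mcat b c)
      (f' : hom mcat a' b') (g' : hom mcat b' c'),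
      tensm a c a' c' (f ;; g) (f' ;; g') = tensm a b a' b' f f' ;; tensm b c b' c' g g';
  tens_assoc_ob : forall a b c, tens (tens a b) c = tens a (tens b c);
  tens_unitl_ob : forall a, tens munit a = a;
  tens_unitr_ob : forall a, tens a munit = a;
  tens_assoc_hom : forall a a' b b' c c' (f : hom mcat a a')
      (g : hom mcat b b') (h : hom mcat c c'),
      tensm _ _ _ _ (tensm _ _ _ _ f g) h ;; idc (tens_assoc_ob a' b' c')
      = idc (tens_assoc_ob a b c) ;; tensm _ _ _ _ f (tensm _ _ _ _ g h);
  tens_unitl_hom : forall a a' (f : hom mcat a a'),
      tensm _ _ _ _ (idm munit) f ;; idc (tens_unitl_ob a') = idc (tens_unitl_ob a) ;; f;
  tens_unitr_hom : forall a a' (f : hom mcat a a'),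
      tensm _ _ _ _ f (idm munit) ;; idc (tens_unitr_ob a') = idc (tens_unitr_ob a) ;; f;
  sym : forall a b, hom mcat (tens a b) (tens b a);
  sym_nat : forall a a' b b' (f : hom mcat a a') (g : hom mcat b b'),
      tensm _ _ _ _ f g ;; sym a' b' = sym a b ;; tensm _ _ _ _ g f;
  sym_inv : forall a b, sym a b ;; sym b a = idm (tens a b);
  sym_hex : forall a b c,
      sym a (tens b c)
      = idc (eq_sym (tens_assoc_ob a b c)) ;; tensm _ _ _ _ (sym a b) (idm c)
        ;; idc (tens_assoc_ob b a c) ;; tensm _ _ _ _ (idm b) (sym a c)
        ;; idc (eq_sym (tens_assoc_ob b c a))
}.
Arguments tens {s} a b.
Arguments tensm {s a b c d} _ _.
Arguments munit {s}.
Arguments tens_assoc_ob {s} a b c.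
Arguments tens_unitl_ob {s} a.
Arguments tens_unitr_ob {s} a.
Arguments sym {s} a b.

Record LNL (C : Cartesian) (L : SymStrictMonoidal) := {
  FF : Functor C L;
  UU : Functor L C;
  eta : forall X : C, hom C X (UU (FF X));
  eps : forall A : L, hom L (FF (UU A)) A;
  eta_nat : forall X Y (f : hom C X Y),
      f ;; eta Y = eta X ;; fmap UU (fmap FF f);
  eps_nat : forall A B (g : hom L A B),
      fmap FF (fmap UU g) ;; eps B = eps A ;; g;
  triangle_F : forall X : C, fmap FF (eta X) ;; eps (FF X) = idm (FF X);
  triangle_U : forall A : L, eta (UU A) ;; fmap UU (eps A) = idm (UU A);
  mm : forall X Y : C, hom L (tens (FF X) (FF Y)) (FF (prod X Y));
  mm_inv : forall X Y : C, hom L (FF (prod X Y)) (tens (FF X) (FF Y));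
  mm_iso1 : forall X Y, mm X Y ;; mm_inv X Y = idm _;
  mm_iso2 : forall X Y, mm_inv X Y ;; mm X Y = idm _;
  m1 : hom L munit (FF term);
  m1_inv : hom L (FF term) munit;
  m1_iso1 : m1 ;; m1_inv = idm _;
  m1_iso2 : m1_inv ;; m1 = idm _;
  mm_nat : forall X X' Y Y' (f : hom C X X') (g : hom C Y Y'),
      tensm (fmap FF f) (fmap FF g) ;; mm X' Y' = mm X Y ;; fmap FF (prodm f g);
  mm_assoc : forall X Y Z : C,
      tensm (mm X Y) (idm (FF Z)) ;; mm (prod X Y) Z ;; fmap FF (assocC X Y Z)
      = idc (tens_assoc_ob (FF X) (FF Y) (FF Z)) ;; tensm (idm (FF X)) (mm Y Z)
        ;; mm X (prod Y Z);
  mm_unitl : forall X : C,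
      tensm m1 (idm (FF X)) ;; mm term X ;; fmap FF (p2 term X)
      = idc (tens_unitl_ob (FF X));
  mm_unitr : forall X : C,
      tensm (idm (FF X)) m1 ;; mm X term ;; fmap FF (p1 X term)
      = idc (tens_unitr_ob (FF X));
  mm_sym : forall X Y : C,
      sym (FF X) (FF Y) ;; mm Y X = mm X Y ;; fmap FF (swapC X Y)
}.
Arguments FF {C L} _.
Arguments mm {C L} _ X Y.
Arguments mm_inv {C L} _ X Y.
Arguments m1 {C L} _.
Arguments m1_inv {C L} _.

Section Simple.
Variables (C : Cartesian) (L : SymStrictMonoidal) (A : LNL C L).

Local Notation F := (FF A).

Definition S_hom (X J Y K : C) : Type := (hom C X Y * hom C (prod X J) K)%type.
Definition S_id (X J : C) : S_hom X J X J := (idm X, p2 X J).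
Definition S_comp {X J Y K Z M : C} (a : S_hom X J Y K) (b : S_hom Y K Z M)
  : S_hom X J Z M :=
  (fst a ;; fst b,
   prodm (diag X) (idm J) ;; assocC X X J ;; prodm (fst a) (snd a) ;; snd b).
Definition S_cart {X Y : C} (f : hom C X Y) (K : C) : S_hom X K Y K :=
  (f, p2 X K).
Definition S_fib {X J K : C} (u : hom C (prod X J) K) : S_hom X J X K :=
  (idm X, u).
Definition S_fprod {X J J' K K' : C} (a : S_hom X J X J') (b : S_hom X K X K')
  : S_hom X (prod J K) X (prod J' K') :=
  (idm X, pair (prodm (idm X) (p1 J K) ;; snd a) (prodm (idm X) (p2 J K) ;; snd b)).
Definition S_assoc (X J K M : C) : S_hom X (prod (prod J K) M) X (prod J (prod K M)) :=
  (idm X, p2 X _ ;; assocC J K M).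
Definition S_lunit (X J : C) : S_hom X (prod term J) X J :=
  (idm X, p2 X _ ;; p2 term J).
Definition S_runit (X J : C) : S_hom X (prod J term) X J :=
  (idm X, p2 X _ ;; p1 J term).
Definition S_sym (X J K : C) : S_hom X (prod J K) X (prod K J) :=
  (idm X, p2 X _ ;; swapC J K).

Definition wk (X : C) : hom L (F X) munit := fmap F (bang X) ;; m1_inv A.
Definition ctr (X : C) : hom L (F X) (tens (F X) (F X)) :=
  fmap F (diag X) ;; mm_inv A X X.

Definition LS_hom (X : C) (B : L) (Y : C) (B' : L) : Type :=
  (hom C X Y * hom L (tens (F X) B) B')%type.
Definition LS_id (X : C) (B : L) : LS_hom X B X B :=
  (idm X, tensm (wk X) (idm B) ;; idc (tens_unitl_ob B)).
Definition LS_comp {X Y Z : C} {B B' B'' : L}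
  (a : LS_hom X B Y B') (b : LS_hom Y B' Z B'') : LS_hom X B Z B'' :=
  (fst a ;; fst b,
   tensm (ctr X) (idm B) ;; idc (tens_assoc_ob (F X) (F X) B)
   ;; tensm (fmap F (fst a)) (snd a) ;; snd b).
Definition LS_cart {X Y : C} (f : hom C X Y) (B : L) : LS_hom X B Y B :=
  (f, tensm (wk X) (idm B) ;; idc (tens_unitl_ob B)).

Definition LS_eq1 (X : C) (B B' : L)
  : tens (tens (F X) (F X)) (tens B B') = tens (F X) (tens (tens (F X) B) B') :=
  eq_trans (tens_assoc_ob (F X) (F X) (tens B B'))
           (f_equal (tens (F X)) (eq_sym (tens_assoc_ob (F X) B B'))).
Definition LS_eq2 (X : C) (B B' : L)
  : tens (F X) (tens (tens B (F X)) B') = tens (tens (F X) B) (tens (F X) B') :=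
  eq_trans (f_equal (tens (F X)) (tens_assoc_ob B (F X) B'))
           (eq_sym (tens_assoc_ob (F X) B (tens (F X) B'))).
Definition LS_ftens {X : C} {B1 B1' B2 B2' : L}
  (a : LS_hom X B1 X B1') (b : LS_hom X B2 X B2')
  : LS_hom X (tens B1 B2) X (tens B1' B2') :=
  (idm X,
   tensm (ctr X) (idm (tens B1 B2)) ;; idc (LS_eq1 X B1 B2)
   ;; tensm (idm (F X)) (tensm (sym (F X) B1) (idm B2))
   ;; idc (LS_eq2 X B1 B2) ;; tensm (snd a) (snd b)).
(* structure maps of the (strict) symmetric monoidal fibre LS(C)_X: the
   associator and unitors are identities (id_X, w_X (x) id) transported along
   the object equalities of the strict structure of L *)
Definition LS_assoc (X : C) (B1 B2 B3 : L)
  : LS_hom X (tens (tens B1 B2) B3) X (tens B1 (tens B2 B3)) :=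
  (idm X, tensm (wk X) (idm _) ;; idc (tens_unitl_ob _)
          ;; idc (tens_assoc_ob B1 B2 B3)).
Definition LS_lunit (X : C) (B : L) : LS_hom X (tens munit B) X B :=
  (idm X, tensm (wk X) (idm _) ;; idc (tens_unitl_ob _) ;; idc (tens_unitl_ob B)).
Definition LS_runit (X : C) (B : L) : LS_hom X (tens B munit) X B :=
  (idm X, tensm (wk X) (idm _) ;; idc (tens_unitl_ob _) ;; idc (tens_unitr_ob B)).
Definition LS_sym (X : C) (B1 B2 : L) : LS_hom X (tens B1 B2) X (tens B2 B1) :=
  (idm X, tensm (wk X) (idm _) ;; idc (tens_unitl_ob _) ;; sym B1 B2).

Definition FS_hom {X J Y K : C} (a : S_hom X J Y K) : LS_hom X (F J) Y (F K) :=
  (fst a, mm A X J ;; fmap F (snd a)).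

Definition FS_phi0 (X : C) : LS_hom X munit X (F term) :=
  (idm X, tensm (wk X) (idm munit) ;; idc (tens_unitl_ob munit) ;; m1 A).
Definition FS_phi (X J K : C) : LS_hom X (tens (F J) (F K)) X (F (prod J K)) :=
  (idm X, tensm (wk X) (idm _) ;; idc (tens_unitl_ob _) ;; mm A J K).

Definition FS_is_functor : Prop :=
  (forall X J : C, FS_hom (S_id X J) = LS_id X (F J)) /\
  (forall (X J Y K Z M : C) (a : S_hom X J Y K) (b : S_hom Y K Z M),
      FS_hom (S_comp a b) = LS_comp (FS_hom a) (FS_hom b)).

(* ls o F^S = s (on morphisms; on objects both give X), and preservation of
   the chosen cartesian morphisms *)
Definition FS_is_split_fibred : Prop :=
  (forall (X J Y K : C) (a : S_hom X J Y K), fst (FS_hom a) = fst a) /\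
  (forall (X Y K : C) (f : hom C X Y), FS_hom (S_cart f K) = LS_cart f (F K)).

(* on the fibre over X, (F^S, phi0, phi) is a symmetric lax monoidal functor
   (S(C)_X, x_X, (X,I)) -> (LS(C)_X, (x)_X, (X,1)); functoriality on the
   fibre is part of FS_is_functor *)
Definition FS_fibre_sym_lax_monoidal (X : C) : Prop :=
  (forall (J J' K K' : C) (u : hom C (prod X J) J') (v : hom C (prod X K) K'),
      LS_comp (LS_ftens (FS_hom (S_fib u)) (FS_hom (S_fib v))) (FS_phi X J' K')
      = LS_comp (FS_phi X J K) (FS_hom (S_fprod (S_fib u) (S_fib v)))) /\
  (forall J K M : C,
      LS_comp (LS_comp (LS_ftens (FS_phi X J K) (LS_id X (F M)))
                       (FS_phi X (prod J K) M))
              (FS_hom (S_assoc X J K M))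
      = LS_comp (LS_comp (LS_assoc X (F J) (F K) (F M))
                         (LS_ftens (LS_id X (F J)) (FS_phi X K M)))
                (FS_phi X J (prod K M))) /\
  (forall J : C,
      LS_comp (LS_comp (LS_ftens (FS_phi0 X) (LS_id X (F J))) (FS_phi X term J))
              (FS_hom (S_lunit X J))
      = LS_lunit X (F J)) /\
  (forall J : C,
      LS_comp (LS_comp (LS_ftens (LS_id X (F J)) (FS_phi0 X)) (FS_phi X J term))
              (FS_hom (S_runit X J))
      = LS_runit X (F J)) /\
  (forall J K : C,
      LS_comp (LS_sym X (F J) (F K)) (FS_phi X K J)
      = LS_comp (FS_phi X J K) (FS_hom (S_sym X J K))).

End Simple.
Arguments FS_is_functor {C L} A.
Arguments FS_is_split_fibred {C L} A.
Arguments FS_fibre_sym_lax_monoidal {C L} A X.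

(* Main.v *)
Require Import Defs.
From Stdlib Require Import ProofIrrelevance.
From Corelib Require Import ssreflect.

Lemma idc_comp {K : Category} {a b c : ob K} (e1 : a = b) (e2 : b = c) :
  idc e1 ;; idc e2 = idc (eq_trans e1 e2).
Proof. destruct e2. simpl. apply comp_id_r. Qed.

Lemma idc_pi {K : Category} {a b : ob K} (e e' : a = b) : idc e = idc e'.
Proof. by rewrite (proof_irrelevance _ e e'). Qed.

Lemma idc_refl {K : Category} {a : ob K} (e : a = a) : idc e = idm a.
Proof. by rewrite (proof_irrelevance _ e eq_refl). Qed.

Lemma idc_comp_r {K : Category} {a b c d : ob K} (e1 : a = b) (e2 : b = c) (f : hom K c d) :
  idc e1 ;; (idc e2 ;; f) = idc (eq_trans e1 e2) ;; f.
Proof. by rewrite -comp_assoc idc_comp. Qed.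

Lemma idc_inv {K : Category} {a b : ob K} (e : a = b) : idc e ;; idc (eq_sym e) = idm a.
Proof. destruct e. apply comp_id_l. Qed.
Lemma idc_inv' {K : Category} {a b : ob K} (e : a = b) : idc (eq_sym e) ;; idc e = idm b.
Proof. destruct e. apply comp_id_l. Qed.


Lemma tens_idc_l {L : SymStrictMonoidal} {a b : ob L} (e : a = b) (c : ob L) :
  tensm (idc e) (idm c) = idc (f_equal (fun x => tens x c) e).
Proof. destruct e. simpl. apply tens_id. Qed.
Lemma tens_idc_r {L : SymStrictMonoidal} {a b : ob L} (e : a = b) (c : ob L) :
  tensm (idm c) (idc e) = idc (f_equal (tens c) e).
Proof. destruct e. simpl. apply tens_id. Qed.

Lemma tens_comp' {L : SymStrictMonoidal} {a b c a' b' c' : ob L} (f : hom L a b) (g : hom L b c)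
  (f' : hom L a' b') (g' : hom L b' c') :
  tensm f f' ;; tensm g g' = tensm (f ;; g) (f' ;; g').
Proof. by rewrite tens_comp. Qed.

Lemma tens_split_l {L : SymStrictMonoidal} {a b c d : ob L} (f : hom L a b) (g : hom L c d) :
  tensm f g = tensm f (idm c) ;; tensm (idm b) g.
Proof. by rewrite tens_comp' comp_id_l comp_id_r. Qed.
Lemma tens_split_r {L : SymStrictMonoidal} {a b c d : ob L} (f : hom L a b) (g : hom L c d) :
  tensm f g = tensm (idm a) g ;; tensm f (idm d).
Proof. by rewrite tens_comp' comp_id_l comp_id_r. Qed.

Lemma assoc_inv_nat {L : SymStrictMonoidal} {a a' b b' c c' : ob L} (f : hom L a a')
  (g : hom L b b') (h : hom L c c') :
  tensm f (tensm g h) ;; idc (eq_sym (tens_assoc_ob a' b' c'))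
  = idc (eq_sym (tens_assoc_ob a b c)) ;; tensm (tensm f g) h.
Proof.
  rewrite -[LHS]comp_id_l -(idc_inv' (tens_assoc_ob a b c)).
  rewrite !comp_assoc -(comp_assoc _ _ _ _ _ (idc _) (tensm f _)) -tens_assoc_hom.
  by rewrite !comp_assoc idc_inv comp_id_r.
Qed.

Lemma sym_transport {L : SymStrictMonoidal} (a b b' : ob L) (e : b = b') :
  sym a b = idc (f_equal (tens a) e) ;; sym a b' ;; idc (f_equal (fun x => tens x a) (eq_sym e)).
Proof. destruct e. simpl. by rewrite comp_id_l comp_id_r. Qed.

Lemma unitr_conj {L : SymStrictMonoidal} {a a' : ob L} (f : hom L a a') :
  tensm f (idm munit) = idc (tens_unitr_ob a) ;; f ;; idc (eq_sym (tens_unitr_ob a')).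
Proof.
  rewrite -tens_unitr_hom comp_assoc idc_inv comp_id_r //.
Qed.
Lemma unitl_conj {L : SymStrictMonoidal} {a a' : ob L} (f : hom L a a') :
  tensm (idm munit) f = idc (tens_unitl_ob a) ;; f ;; idc (eq_sym (tens_unitl_ob a')).
Proof.
  rewrite -tens_unitl_hom comp_assoc idc_inv comp_id_r //.
Qed.

Ltac idc_refl_all :=
  repeat match goal with
  | |- context [@idc ?K ?a ?a ?e] => rewrite (@idc_refl K a e)
  end.
Ltac idc_norm :=
  rewrite ?comp_assoc; rewrite ?idc_comp_r ?idc_comp; idc_refl_all; rewrite ?comp_id_l ?comp_id_r.

Lemma sym_unit_r {L : SymStrictMonoidal} (B : ob L) (e : tens B munit = tens munit B) :
  sym B munit = idc e.
Proof.
  set s := sym B munit.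
  have H := sym_hex L B munit munit.
  rewrite (sym_transport B _ _ (tens_unitl_ob munit)) in H.
  rewrite unitr_conj unitl_conj in H.
  fold s in H.
  have H2 : s = s ;; (idc (eq_sym e) ;; s).
  { have H3 := f_equal (fun k => idc (eq_sym (f_equal (tens B) (tens_unitl_ob munit))) ;; k ;;
       idc (eq_sym (f_equal (fun x : ob L => tens x B) (eq_sym (tens_unitl_ob munit))))) H.
    simpl in H3. revert H3. idc_norm. move=> H3. rewrite {1}H3. f_equal. f_equal. apply idc_pi. }
  have H4 : s ;; sym munit B = idm _ := sym_inv L B munit.
  have H5 : idm _ = s ;; idc (eq_sym e).
  { rewrite -H4. rewrite [in LHS]H2. rewrite -comp_assoc (comp_assoc _ _ _ _ _ _ s) H4 comp_id_r //. }
  rewrite -[LHS]comp_id_r -(idc_inv' e) -comp_assoc -H5 comp_id_l //.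
Qed.

Lemma sym_unit_l {L : SymStrictMonoidal} (B : ob L) (e : tens munit B = tens B munit) :
  sym munit B = idc e.
Proof.
  have H4 := sym_inv L B munit.
  rewrite (sym_unit_r B (eq_sym e)) in H4.
  rewrite -[LHS]comp_id_l -(idc_inv e) comp_assoc H4 comp_id_r.
  apply idc_pi.
Qed.

Lemma comp_pair {C : Cartesian} {W Z X Y : C} (h : hom C W Z) (f : hom C Z X) (g : hom C Z Y) :
  h ;; pair f g = pair (h ;; f) (h ;; g).
Proof. by rewrite (pair_uniq _ _ _ _ (h ;; pair f g)) !comp_assoc pair_p1 pair_p2. Qed.
Lemma comp_pair_r {C : Cartesian} {W Z X Y V : C} (h : hom C W Z) (f : hom C Z X) (g : hom C Z Y) (k : hom C (prod X Y) V) :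
  h ;; (pair f g ;; k) = pair (h ;; f) (h ;; g) ;; k.
Proof. by rewrite -comp_assoc comp_pair. Qed.
Lemma pair_p1_r {C : Cartesian} {Z X Y W : C} (f : hom C Z X) (g : hom C Z Y) (h : hom C X W) :
  pair f g ;; (p1 X Y ;; h) = f ;; h.
Proof. by rewrite -comp_assoc pair_p1. Qed.
Lemma pair_p2_r {C : Cartesian} {Z X Y W : C} (f : hom C Z X) (g : hom C Z Y) (h : hom C Y W) :
  pair f g ;; (p2 X Y ;; h) = g ;; h.
Proof. by rewrite -comp_assoc pair_p2. Qed.
Lemma pair_eta {C : Cartesian} {X Y : C} : pair (p1 X Y) (p2 X Y) = idm _.
Proof. by rewrite (pair_uniq _ _ _ _ (idm (prod X Y))) !comp_id_l. Qed.
Lemma cext {C : Cartesian} {Z X Y : C} (f g : hom C Z (prod X Y)) :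
  f ;; p1 X Y = g ;; p1 X Y -> f ;; p2 X Y = g ;; p2 X Y -> f = g.
Proof. move=> H1 H2. by rewrite (pair_uniq _ _ _ _ f) (pair_uniq _ _ _ _ g) H1 H2. Qed.
Lemma bang_eq {C : Cartesian} {X : C} (f g : hom C X term) : f = g.
Proof. by rewrite (bang_uniq _ _ f) (bang_uniq _ _ g). Qed.

Definition assocI {C : Cartesian} (X Y Z : C) : hom C (prod X (prod Y Z)) (prod (prod X Y) Z) :=
  pair (pair (p1 _ _) (p2 _ _ ;; p1 Y Z)) (p2 _ _ ;; p2 Y Z).
Definition mid4 {C : Cartesian} (X X' J K : C) :
  hom C (prod (prod X X') (prod J K)) (prod (prod X J) (prod X' K)) :=
  pair (pair (p1 _ _ ;; p1 X X') (p2 _ _ ;; p1 J K)) (pair (p1 _ _ ;; p2 X X') (p2 _ _ ;; p2 J K)).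

Ltac cnorm :=
  unfold prodm, diag, assocC, swapC, assocI, mid4;
  repeat (rewrite ?comp_assoc ?comp_pair ?comp_pair_r ?pair_p1 ?pair_p2 ?pair_p1_r ?pair_p2_r ?comp_id_l ?comp_id_r).

Ltac cext_solve :=
  cnorm; repeat (first [ reflexivity | apply cext; cnorm ]).

Lemma c_assocK {C : Cartesian} (X Y Z : C) : assocC X Y Z ;; assocI X Y Z = idm _.
Proof. cext_solve. Qed.
Lemma c_p2 {C : Cartesian} (X B : C) : prodm (bang X) (idm B) ;; p2 term B = p2 X B.
Proof. cext_solve. Qed.
Lemma c_p1 {C : Cartesian} (X B : C) : prodm (idm B) (bang X) ;; p1 B term = p1 B X.
Proof. cext_solve. Qed.
Lemma c_diag2 {C : Cartesian} (X : C) : diag X ;; p2 X X = idm X.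
Proof. cext_solve. Qed.
Lemma c_diag1 {C : Cartesian} (X : C) : diag X ;; p1 X X = idm X.
Proof. cext_solve. Qed.
Lemma c_nat {C : Cartesian} (X X' J K : C) :
  prodm (idm X) (prodm (swapC X' J) (idm K) ;; assocC J X' K) ;; assocI X J (prod X' K)
  = prodm (idm X) (assocC X' J K) ;; assocI X X' (prod J K) ;; mid4 X X' J K.
Proof. cext_solve. Qed.
Lemma c_nat2 {C : Cartesian} (X J K J' K' : C) (u : hom C (prod X J) J') (v : hom C (prod X K) K') :
  prodm (diag X) (idm (prod J K)) ;; mid4 X X J K ;; prodm u v
  = pair (prodm (idm X) (p1 J K) ;; u) (prodm (idm X) (p2 J K) ;; v).
Proof. cext_solve. Qed.

Lemma fmap_idm {C D : Category} (F : Functor C D) (X : C) : fmap F (idm X) = idm (F X).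
Proof. apply fmap_id. Qed.

Lemma mm_nat_l {C : Cartesian} {L : SymStrictMonoidal} (A : LNL C L) (X X' Y : C) (f : hom C X X') :
  tensm (fmap (FF A) f) (idm (FF A Y)) ;; mm A X' Y = mm A X Y ;; fmap (FF A) (prodm f (idm Y)).
Proof. by rewrite -mm_nat fmap_idm. Qed.
Lemma mm_nat_r {C : Cartesian} {L : SymStrictMonoidal} (A : LNL C L) (X Y Y' : C) (g : hom C Y Y') :
  tensm (idm (FF A X)) (fmap (FF A) g) ;; mm A X Y' = mm A X Y ;; fmap (FF A) (prodm (idm X) g).
Proof. by rewrite -mm_nat fmap_idm. Qed.

Lemma wk_nat {C : Cartesian} {L : SymStrictMonoidal} (A : LNL C L) (X Y : C) (f : hom C X Y) :
  fmap (FF A) f ;; wk C L A Y = wk C L A X.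
Proof. unfold wk. by rewrite -comp_assoc -fmap_comp (bang_eq (f ;; bang Y) (bang X)). Qed.

Lemma P2 {C : Cartesian} {L : SymStrictMonoidal} (A : LNL C L) (X B : C) :
  mm A X B ;; fmap (FF A) (p2 X B) = tensm (wk C L A X) (idm (FF A B)) ;; idc (tens_unitl_ob (FF A B)).
Proof.
  symmetry. unfold wk. rewrite -(mm_unitl _ _ A B).
  rewrite -!comp_assoc tens_comp' comp_id_l !comp_assoc m1_iso2 comp_id_r.
  rewrite -(comp_assoc _ _ _ _ _ (tensm _ _)) mm_nat_l comp_assoc -fmap_comp c_p2 //.
Qed.
Lemma P1 {C : Cartesian} {L : SymStrictMonoidal} (A : LNL C L) (X B : C) :
  mm A B X ;; fmap (FF A) (p1 B X) = tensm (idm (FF A B)) (wk C L A X) ;; idc (tens_unitr_ob (FF A B)).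
Proof.
  symmetry. unfold wk. rewrite -(mm_unitr _ _ A B).
  rewrite -!comp_assoc tens_comp' comp_id_l !comp_assoc m1_iso2 comp_id_r.
  rewrite -(comp_assoc _ _ _ _ _ (tensm _ _)) mm_nat_r comp_assoc -fmap_comp c_p1 //.
Qed.

Lemma counitL {C : Cartesian} {L : SymStrictMonoidal} (A : LNL C L) (X : C) :
  ctr C L A X ;; tensm (wk C L A X) (idm (FF A X)) ;; idc (tens_unitl_ob (FF A X)) = idm _.
Proof.
  unfold ctr. rewrite !comp_assoc -P2.
  rewrite -(comp_assoc _ _ _ _ _ (mm_inv _ _ _)) mm_iso2 comp_id_l -fmap_comp c_diag2 fmap_idm //.
Qed.
Lemma counitR {C : Cartesian} {L : SymStrictMonoidal} (A : LNL C L) (X : C) :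
  ctr C L A X ;; tensm (idm (FF A X)) (wk C L A X) ;; idc (tens_unitr_ob (FF A X)) = idm _.
Proof.
  unfold ctr. rewrite !comp_assoc -P1.
  rewrite -(comp_assoc _ _ _ _ _ (mm_inv _ _ _)) mm_iso2 comp_id_l -fmap_comp c_diag1 fmap_idm //.
Qed.

Lemma cancelL {C : Cartesian} {L : SymStrictMonoidal} (A : LNL C L) (X : C) (B : ob L) :
  tensm (ctr C L A X) (idm B) ;; idc (tens_assoc_ob (FF A X) (FF A X) B)
  ;; tensm (wk C L A X) (idm (tens (FF A X) B)) ;; idc (tens_unitl_ob (tens (FF A X) B)) = idm _.
Proof.
  have -> : tensm (wk C L A X) (idm (tens (FF A X) B))
            = tensm (wk C L A X) (tensm (idm (FF A X)) (idm B)) by rewrite tens_id.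
  rewrite (comp_assoc _ _ _ _ _ (tensm _ _) (idc _)) -tens_assoc_hom.
  rewrite !comp_assoc idc_comp -(comp_assoc _ _ _ _ _ (tensm _ _) (tensm _ _)) tens_comp'.
  rewrite (idc_pi _ (f_equal (fun x => tens x B) (tens_unitl_ob (FF A X)))) -tens_idc_l tens_comp'.
  rewrite !comp_id_l counitL tens_id //.
Qed.

Lemma cancelR {C : Cartesian} {L : SymStrictMonoidal} (A : LNL C L) (X : C) (B : ob L) :
  tensm (ctr C L A X) (idm B) ;; idc (tens_assoc_ob (FF A X) (FF A X) B)
  ;; tensm (idm (FF A X)) (tensm (wk C L A X) (idm B) ;; idc (tens_unitl_ob B)) = idm _.
Proof.
  have -> : tensm (idm (FF A X)) (tensm (wk C L A X) (idm B) ;; idc (tens_unitl_ob B))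
     = tensm (idm (FF A X)) (tensm (wk C L A X) (idm B)) ;; tensm (idm (FF A X)) (idc (tens_unitl_ob B))
     by rewrite tens_comp' comp_id_l.
  rewrite -(comp_assoc _ _ _ _ _ _ (tensm _ _) (tensm _ _)).
  rewrite (comp_assoc _ _ _ _ _ (tensm _ _) (idc _)) -tens_assoc_hom.
  rewrite tens_idc_r !comp_assoc idc_comp -(comp_assoc _ _ _ _ _ (tensm _ _) (tensm _ _)) tens_comp'.
  rewrite (idc_pi _ (f_equal (fun x => tens x B) (tens_unitr_ob (FF A X)))) -tens_idc_l tens_comp'.
  rewrite !comp_id_l counitR tens_id //.
Qed.


Lemma rw_pre {K : Category} {a b c d : ob K} {f : hom K a b} {g : hom K b c} {h : hom K a c}
  (H : f ;; g = h) (k : hom K c d) : f ;; (g ;; k) = h ;; k.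
Proof. by rewrite -comp_assoc H. Qed.
Lemma rw_pre3 {K : Category} {a b c d e : ob K} {f : hom K a b} {g : hom K b c} {g' : hom K c d} {h : hom K a d}
  (H : f ;; g ;; g' = h) (k : hom K d e) : f ;; (g ;; (g' ;; k)) = h ;; k.
Proof. by rewrite -H !comp_assoc. Qed.
Lemma rw_pre4 {K : Category} {a b c d e x : ob K} {f : hom K a b} {g : hom K b c} {g' : hom K c d}
  {g'' : hom K d e} {h : hom K a e}
  (H : f ;; g ;; g' ;; g'' = h) (k : hom K e x) : f ;; (g ;; (g' ;; (g'' ;; k))) = h ;; k.
Proof. by rewrite -H !comp_assoc. Qed.

Definition pure {C : Cartesian} {L : SymStrictMonoidal} (A : LNL C L) (X : C) {B B' : ob L}
  (t : hom L B B') : LS_hom C L A X B X B' :=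
  (idm X, tensm (wk C L A X) (idm B) ;; idc (tens_unitl_ob B) ;; t).

Lemma L1 {C : Cartesian} {L : SymStrictMonoidal} (A : LNL C L) (X Y : C) (B B' B'' : ob L)
  (f : hom C X Y) (s : hom L (tens (FF A X) B) B') (t : hom L B' B'') :
  LS_comp C L A (f, s) (pure A Y t) = (f ;; idm Y, s ;; t).
Proof.
  unfold LS_comp, pure; simpl. f_equal.
  rewrite !comp_assoc (rw_pre (tens_comp' _ _ _ _)) wk_nat comp_id_r (tens_split_l (wk C L A X) s).
  rewrite !comp_assoc (rw_pre (tens_unitl_hom _ _ _ _)).
  rewrite !comp_assoc (rw_pre4 (cancelL _ _ _)) comp_id_l //.
Qed.

Lemma L2 {C : Cartesian} {L : SymStrictMonoidal} (A : LNL C L) (X Y : C) (B B' B'' : ob L)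
  (g : hom C X Y) (t : hom L B B') (s : hom L (tens (FF A X) B') B'') :
  LS_comp C L A (pure A X t) (g, s) = (idm X ;; g, tensm (idm (FF A X)) t ;; s).
Proof.
  unfold LS_comp, pure; simpl. f_equal.
  rewrite fmap_idm.
  have -> : tensm (idm (FF A X)) (tensm (wk C L A X) (idm B) ;; idc (tens_unitl_ob B) ;; t)
     = tensm (idm (FF A X)) (tensm (wk C L A X) (idm B) ;; idc (tens_unitl_ob B)) ;; tensm (idm (FF A X)) t
     by rewrite tens_comp' comp_id_l.
  rewrite !comp_assoc (rw_pre3 (cancelR _ _ _)) comp_id_l //.
Qed.

Lemma tens_idc_both {L : SymStrictMonoidal} {a b c d : ob L} (e1 : a = b) (e2 : c = d) :
  tensm (idc e1) (idc e2) = idc (f_equal2 tens e1 e2).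
Proof. destruct e1, e2. rewrite tens_id idc_refl. reflexivity. Qed.

Lemma stepB {L : SymStrictMonoidal} {a a' c c' : ob L} (x : hom L a a') (x' : hom L c c') (B1 B2 : ob L)
  (E : tens a (tens (tens B1 c) B2) = tens (tens a B1) (tens c B2)) :
  exists e, idc E ;; tensm (tensm x (idm B1)) (tensm x' (idm B2))
    = tensm x (tensm (tensm (idm B1) x') (idm B2)) ;; idc e.
Proof.
  rewrite (idc_pi E (eq_trans (f_equal (tens a) (tens_assoc_ob B1 c B2)) (eq_sym (tens_assoc_ob a B1 (tens c B2))))).
  rewrite -idc_comp -tens_idc_r comp_assoc -assoc_inv_nat.
  rewrite -comp_assoc tens_comp' comp_id_l -tens_assoc_hom.
  rewrite -(comp_id_r _ _ _ x) -tens_comp' comp_id_r tens_idc_r.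
  eexists. rewrite !comp_assoc idc_comp. reflexivity.
Qed.

Lemma stepC {L : SymStrictMonoidal} {a : ob L} (x : hom L a munit) (B1 B2 : ob L) :
  exists e, tensm (idm a) (tensm (sym a B1) (idm B2)) ;; tensm x (tensm (tensm (idm B1) x) (idm B2))
    = tensm x (tensm (tensm x (idm B1)) (idm B2)) ;; idc e.
Proof.
  rewrite !tens_comp' comp_id_l comp_id_r -sym_nat.
  rewrite (sym_unit_l B1 (eq_trans (tens_unitl_ob B1) (eq_sym (tens_unitr_ob B1)))).
  rewrite -{1}(comp_id_r _ _ _ (idm B2)) -tens_comp' -{1}(comp_id_r _ _ _ x) -tens_comp'.
  rewrite tens_idc_l tens_idc_r. eexists. reflexivity.
Qed.

Lemma stepD {L : SymStrictMonoidal} {a a' c c' : ob L} (x : hom L a a') (x' : hom L c c') (B1 B2 : ob L)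
  (E : tens (tens a c) (tens B1 B2) = tens a (tens (tens c B1) B2)) :
  exists e, idc E ;; tensm x (tensm (tensm x' (idm B1)) (idm B2))
    = tensm (tensm x x') (idm (tens B1 B2)) ;; idc e.
Proof.
  rewrite (idc_pi E (eq_trans (tens_assoc_ob a c (tens B1 B2)) (f_equal (tens a) (eq_sym (tens_assoc_ob c B1 B2))))).
  rewrite -idc_comp -tens_idc_r comp_assoc tens_comp' comp_id_l -assoc_inv_nat tens_id.
  rewrite -{1}(comp_id_r _ _ _ x) -tens_comp' -comp_assoc -tens_assoc_hom tens_idc_r.
  eexists. rewrite !comp_assoc idc_comp. reflexivity.
Qed.

Lemma ctr_ww {C : Cartesian} {L : SymStrictMonoidal} (A : LNL C L) (X : C) :
  exists e, ctr C L A X ;; tensm (wk C L A X) (wk C L A X) = wk C L A X ;; idc e.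
Proof.
  have H := counitR A X.
  have H1 : ctr C L A X ;; tensm (idm (FF A X)) (wk C L A X) = idc (eq_sym (tens_unitr_ob (FF A X))).
  { rewrite -[LHS]comp_id_r -(idc_inv (tens_unitr_ob _)) -comp_assoc H comp_id_l //. }
  rewrite (tens_split_r (wk C L A X)) -comp_assoc H1 unitr_conj.
  eexists. rewrite !comp_assoc idc_comp_r idc_refl comp_id_l. reflexivity.
Qed.

Lemma stepE {C : Cartesian} {L : SymStrictMonoidal} (A : LNL C L) (X : C) (B : ob L) :
  exists e, tensm (ctr C L A X) (idm B) ;; tensm (tensm (wk C L A X) (wk C L A X)) (idm B)
    = tensm (wk C L A X) (idm B) ;; idc e.
Proof.
  have [e H] := ctr_ww A X.
  rewrite tens_comp' H comp_id_l -{1}(comp_id_r _ _ _ (idm B)) -tens_comp' tens_idc_l.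
  eexists. reflexivity.
Qed.

Lemma core3 {C : Cartesian} {L : SymStrictMonoidal} (A : LNL C L) (X : C) (B1 B2 : ob L) :
  tensm (ctr C L A X) (idm (tens B1 B2)) ;; idc (LS_eq1 C L A X B1 B2)
  ;; tensm (idm (FF A X)) (tensm (sym (FF A X) B1) (idm B2)) ;; idc (LS_eq2 C L A X B1 B2)
  ;; tensm (tensm (wk C L A X) (idm B1) ;; idc (tens_unitl_ob B1))
           (tensm (wk C L A X) (idm B2) ;; idc (tens_unitl_ob B2))
  = tensm (wk C L A X) (idm (tens B1 B2)) ;; idc (tens_unitl_ob (tens B1 B2)).
Proof.
  rewrite -tens_comp'.
  have [eB HB] := stepB (wk C L A X) (wk C L A X) B1 B2 (LS_eq2 C L A X B1 B2).
  have [eC HC] := stepC (wk C L A X) B1 B2.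
  have [eD HD] := stepD (wk C L A X) (wk C L A X) B1 B2 (LS_eq1 C L A X B1 B2).
  have [eE HE] := stepE A X (tens B1 B2).
  rewrite !comp_assoc (rw_pre HB) !comp_assoc (rw_pre HC) !comp_assoc (rw_pre HD) !comp_assoc (rw_pre HE).
  rewrite tens_idc_both. idc_norm. f_equal. apply idc_pi.
Qed.

Lemma L3 {C : Cartesian} {L : SymStrictMonoidal} (A : LNL C L) (X : C) (B1 B1' B2 B2' : ob L)
  (a : hom L B1 B1') (b : hom L B2 B2') :
  LS_ftens C L A (pure A X a) (pure A X b) = pure A X (tensm a b).
Proof.
  unfold LS_ftens, pure; simpl. f_equal.
  rewrite -tens_comp' -!comp_assoc core3 //.
Qed.

Lemma MA1 {C : Cartesian} {L : SymStrictMonoidal} (A : LNL C L) (X Y Z : C) :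
  tensm (mm A X Y) (idm (FF A Z)) ;; mm A (prod X Y) Z
  = idc (tens_assoc_ob (FF A X) (FF A Y) (FF A Z)) ;; (tensm (idm (FF A X)) (mm A Y Z)
     ;; (mm A X (prod Y Z) ;; fmap (FF A) (assocI X Y Z))).
Proof.
  rewrite -!comp_assoc -(mm_assoc _ _ A X Y Z) !comp_assoc -fmap_comp c_assocK fmap_idm comp_id_r //.
Qed.
Lemma MA2 {C : Cartesian} {L : SymStrictMonoidal} (A : LNL C L) (X Y Z : C) :
  tensm (idm (FF A X)) (mm A Y Z) ;; mm A X (prod Y Z)
  = idc (eq_sym (tens_assoc_ob (FF A X) (FF A Y) (FF A Z))) ;; (tensm (mm A X Y) (idm (FF A Z))
     ;; (mm A (prod X Y) Z ;; fmap (FF A) (assocC X Y Z))).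
Proof.
  rewrite ?comp_assoc -(comp_assoc _ _ _ _ _ (tensm _ _) (mm _ _ _)) (mm_assoc _ _ A X Y Z) !comp_assoc idc_comp_r idc_refl comp_id_l. reflexivity.
Qed.

Lemma MA3 {C : Cartesian} {L : SymStrictMonoidal} (A : LNL C L) (X Y Z : C) :
  idc (tens_assoc_ob (FF A X) (FF A Y) (FF A Z)) ;; (tensm (idm (FF A X)) (mm A Y Z) ;; mm A X (prod Y Z))
  = tensm (mm A X Y) (idm (FF A Z)) ;; (mm A (prod X Y) Z ;; fmap (FF A) (assocC X Y Z)).
Proof. rewrite MA2 idc_comp_r idc_refl comp_id_l //. Qed.

Lemma tens_comp_l1 {L : SymStrictMonoidal} {a b c d : ob L} (f : hom L a b) (g : hom L b c) :
  tensm (f ;; g) (idm d) = tensm f (idm d) ;; tensm g (idm d).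
Proof. by rewrite tens_comp' comp_id_l. Qed.
Lemma tens_id_split {L : SymStrictMonoidal} {a b c d e : ob L} (x : hom L b c) (y : hom L c d) (z : hom L d e) :
  tensm (idm a) (x ;; (y ;; z)) = tensm (idm a) (x ;; y) ;; tensm (idm a) z.
Proof. by rewrite tens_comp' comp_id_l comp_assoc. Qed.

Lemma tid_assoc {L : SymStrictMonoidal} (a b c c' : ob L) (h : hom L c c') :
  tensm (idm (tens a b)) h ;; idc (tens_assoc_ob a b c')
  = idc (tens_assoc_ob a b c) ;; tensm (idm a) (tensm (idm b) h).
Proof. by rewrite -tens_assoc_hom tens_id. Qed.

Lemma tid4 {L : SymStrictMonoidal} {a b0 b1 b2 b3 b4 d : ob L} (x : hom L b0 b1) (y : hom L b1 b2)
  (z : hom L b2 b3) (w : hom L b3 b4) (k : hom L (tens a b4) d) :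
  tensm (idm a) x ;; (tensm (idm a) y ;; (tensm (idm a) z ;; (tensm (idm a) w ;; k)))
  = tensm (idm a) (x ;; (y ;; (z ;; w))) ;; k.
Proof. rewrite -!comp_assoc !tens_comp' !comp_id_l !comp_assoc. reflexivity. Qed.

Lemma MF_L {C : Cartesian} {L : SymStrictMonoidal} (A : LNL C L) (X J K : C) :
  exists e,
  idc (LS_eq1 C L A X (FF A J) (FF A K)) ;; tensm (idm (FF A X)) (tensm (sym (FF A X) (FF A J)) (idm (FF A K)))
  ;; idc (LS_eq2 C L A X (FF A J) (FF A K)) ;; tensm (mm A X J) (mm A X K) ;; mm A (prod X J) (prod X K)
  = idc e ;; (tensm (idm (FF A X)) (tensm (mm A X J) (idm (FF A K)) ;; mm A (prod X J) K)
     ;; (mm A X (prod (prod X J) K)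
     ;; fmap (FF A) (prodm (idm X) (prodm (swapC X J) (idm K) ;; assocC J X K) ;; assocI X J (prod X K)))).
Proof.
  rewrite !comp_assoc (tens_split_r (mm A X J)) comp_assoc MA1 (rw_pre (tid_assoc _ _ _ _ _)).
  rewrite !comp_assoc idc_comp_r.
  rewrite (idc_pi (eq_trans _ _) (f_equal (tens (FF A X)) (tens_assoc_ob (FF A J) (FF A X) (FF A K)))).
  rewrite -tens_idc_r tid4.
  rewrite MA3.
  rewrite -(comp_assoc _ _ _ _ _ (tensm _ _) (tensm _ _)) tens_comp' mm_sym comp_id_l.
  rewrite tens_comp_l1 !comp_assoc (rw_pre (mm_nat_l _ _ _ _ _)) !comp_assoc -fmap_comp.
  rewrite tens_id_split !comp_assoc (rw_pre (mm_nat_r _ _ _ _ _)) !comp_assoc -fmap_comp.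
  eexists. reflexivity.
Qed.

Lemma tens_comp_r1 {L : SymStrictMonoidal} {a b c d : ob L} (f : hom L a b) (g : hom L b c) :
  tensm (idm d) (f ;; g) = tensm (idm d) f ;; tensm (idm d) g.
Proof. by rewrite tens_comp' comp_id_l. Qed.

Lemma MF_R {C : Cartesian} {L : SymStrictMonoidal} (A : LNL C L) (X J K : C) :
  exists e,
  tensm (mm A X X) (mm A J K) ;; mm A (prod X X) (prod J K) ;; fmap (FF A) (mid4 X X J K)
  = idc e ;; (tensm (idm (FF A X)) (tensm (mm A X J) (idm (FF A K)) ;; mm A (prod X J) K)
     ;; (mm A X (prod (prod X J) K)
     ;; fmap (FF A) (prodm (idm X) (assocC X J K) ;; (assocI X X (prod J K) ;; mid4 X X J K)))).
Proof.
  rewrite (tens_split_r (mm A X X)) !comp_assoc (rw_pre (MA1 _ _ _ _)).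
  rewrite !comp_assoc (rw_pre (tid_assoc _ _ _ _ _)) !comp_assoc (rw_pre (tens_comp' _ _ _ _)) comp_id_l MA2.
  rewrite tens_comp_r1 tens_id_split !comp_assoc (rw_pre (mm_nat_r _ _ _ _ _)) !comp_assoc -!fmap_comp.
  rewrite tens_idc_r idc_comp_r.
  eexists. reflexivity.
Qed.

Lemma MF {C : Cartesian} {L : SymStrictMonoidal} (A : LNL C L) (X J K : C) :
  idc (LS_eq1 C L A X (FF A J) (FF A K)) ;; tensm (idm (FF A X)) (tensm (sym (FF A X) (FF A J)) (idm (FF A K)))
  ;; idc (LS_eq2 C L A X (FF A J) (FF A K)) ;; tensm (mm A X J) (mm A X K) ;; mm A (prod X J) (prod X K)
  = tensm (mm A X X) (mm A J K) ;; mm A (prod X X) (prod J K) ;; fmap (FF A) (mid4 X X J K).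
Proof.
  have [e1 H1] := MF_L A X J K. have [e2 H2] := MF_R A X J K.
  rewrite H1 H2 -(comp_assoc _ _ _ _ _ (prodm _ _)) -c_nat.
  f_equal. apply idc_pi.
Qed.

Lemma L1' {C : Cartesian} {L : SymStrictMonoidal} (A : LNL C L) (X Y : C) (B B' B'' : ob L)
  (a : LS_hom C L A X B Y B') (t : hom L B' B'') :
  LS_comp C L A a (pure A Y t) = (fst a ;; idm Y, snd a ;; t).
Proof. destruct a. apply L1. Qed.
Lemma L2' {C : Cartesian} {L : SymStrictMonoidal} (A : LNL C L) (X Y : C) (B B' B'' : ob L)
  (t : hom L B B') (b : LS_hom C L A X B' Y B'') :
  LS_comp C L A (pure A X t) b = (idm X ;; fst b, tensm (idm (FF A X)) t ;; snd b).
Proof. destruct b. apply L2. Qed.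
Lemma LP {C : Cartesian} {L : SymStrictMonoidal} (A : LNL C L) (X : C) (B B' B'' : ob L)
  (a : hom L B B') (b : hom L B' B'') :
  LS_comp C L A (pure A X a) (pure A X b) = pure A X (a ;; b).
Proof. rewrite L1'. unfold pure; simpl. by rewrite comp_id_l comp_assoc. Qed.

Lemma phi_pure {C : Cartesian} {L : SymStrictMonoidal} (A : LNL C L) (X J K : C) :
  FS_phi C L A X J K = pure A X (mm A J K).
Proof. reflexivity. Qed.
Lemma phi0_pure {C : Cartesian} {L : SymStrictMonoidal} (A : LNL C L) (X : C) :
  FS_phi0 C L A X = pure A X (m1 A).
Proof. reflexivity. Qed.
Lemma id_pure {C : Cartesian} {L : SymStrictMonoidal} (A : LNL C L) (X : C) (B : ob L) :
  LS_id C L A X B = pure A X (idm B).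
Proof. unfold LS_id, pure. by rewrite comp_id_r. Qed.
Lemma p2_pure {C : Cartesian} {L : SymStrictMonoidal} (A : LNL C L) (X J K : C) (g : hom C J K) :
  FS_hom C L A ((idm X, p2 X J ;; g) : S_hom C X J X K) = pure A X (fmap (FF A) g).
Proof. unfold FS_hom, pure; simpl. by rewrite fmap_comp -comp_assoc P2. Qed.

Lemma MFk {C : Cartesian} {L : SymStrictMonoidal} (A : LNL C L) (X J K : C) {Z : ob L}
  (k : hom L (FF A (prod (prod X J) (prod X K))) Z) :
  idc (LS_eq1 C L A X (FF A J) (FF A K)) ;; (tensm (idm (FF A X)) (tensm (sym (FF A X) (FF A J)) (idm (FF A K)))
  ;; (idc (LS_eq2 C L A X (FF A J) (FF A K)) ;; (tensm (mm A X J) (mm A X K) ;; (mm A (prod X J) (prod X K) ;; k))))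
  = tensm (mm A X X) (mm A J K) ;; (mm A (prod X X) (prod J K) ;; (fmap (FF A) (mid4 X X J K) ;; k)).
Proof. rewrite -!comp_assoc MF. by rewrite !comp_assoc. Qed.

Lemma tens_split_mid {L : SymStrictMonoidal} {a b c d e : ob L} (f : hom L a b) (g : hom L c d) (h : hom L d e) :
  tensm f (g ;; h) = tensm (idm a) g ;; tensm f h.
Proof. by rewrite tens_comp' comp_id_l. Qed.
Lemma MA3k {C : Cartesian} {L : SymStrictMonoidal} (A : LNL C L) (X Y Z : C) {W : ob L}
  (k : hom L (FF A (prod X (prod Y Z))) W) :
  idc (tens_assoc_ob (FF A X) (FF A Y) (FF A Z)) ;; (tensm (idm (FF A X)) (mm A Y Z) ;; (mm A X (prod Y Z) ;; k))
  = tensm (mm A X Y) (idm (FF A Z)) ;; (mm A (prod X Y) Z ;; (fmap (FF A) (assocC X Y Z) ;; k)).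
Proof. rewrite -(comp_assoc _ _ _ _ _ (tensm _ _)) (rw_pre (MA3 _ _ _ _)) !comp_assoc //. Qed.

Theorem proposition3p14 (C : Cartesian) (L : SymStrictMonoidal) (A : LNL C L) :
  FS_is_functor A /\ FS_is_split_fibred A /\
  (forall X : C, FS_fibre_sym_lax_monoidal A X).
Proof.
  split; [split|split; [split|]].
  - intros X J. unfold FS_hom, S_id, LS_id; simpl. by rewrite P2.
  - intros X J Y K Z M [f u] [g v]. unfold FS_hom, S_comp, LS_comp; simpl. f_equal.
    unfold ctr. rewrite tens_comp_l1 tens_split_mid !fmap_comp !comp_assoc.
    rewrite (rw_pre (mm_nat _ _ A _ _ _ _ _ _)) !comp_assoc MA3k.
    rewrite (rw_pre (tens_comp' (mm_inv A X X) _ _ _)) mm_iso2 comp_id_l tens_id comp_id_l.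
    rewrite (rw_pre (mm_nat_l _ _ _ _ _)) !comp_assoc. reflexivity.
  - intros X J Y K a. reflexivity.
  - intros X Y K f. unfold FS_hom, S_cart, LS_cart; simpl. by rewrite P2.
  - intros X. split; [|split; [|split; [|split]]].
    + intros J J' K K' u v.
      rewrite phi_pure L1' phi_pure L2'. simpl. rewrite !comp_id_l. f_equal.
      rewrite -(tens_comp' (mm A X J)) !comp_assoc mm_nat MFk.
      unfold ctr. rewrite (rw_pre (tens_comp' _ _ _ _)) comp_assoc mm_iso2 comp_id_r comp_id_l.
      rewrite (tens_split_r (fmap (FF A) (diag X))) !comp_assoc (rw_pre (mm_nat_l _ _ _ _ _)).
      rewrite -c_nat2 !fmap_comp !comp_assoc. reflexivity.
    + intros J K M. rewrite !phi_pure !id_pure p2_pure L3 !LP.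
      unfold LS_assoc. fold (pure A X (idc (tens_assoc_ob (FF A J) (FF A K) (FF A M)))).
      rewrite L3 !LP. by rewrite mm_assoc.
    + intros J. rewrite phi0_pure phi_pure id_pure p2_pure L3 !LP.
      unfold LS_lunit. fold (pure A X (idc (tens_unitl_ob (FF A J)))). by rewrite mm_unitl.
    + intros J. rewrite phi0_pure phi_pure id_pure p2_pure L3 !LP.
      unfold LS_runit. fold (pure A X (idc (tens_unitr_ob (FF A J)))). by rewrite mm_unitr.
    + intros J K. rewrite !phi_pure p2_pure.
      unfold LS_sym. fold (pure A X (sym (FF A J) (FF A K))). by rewrite !LP mm_sym.
Qed.
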